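(* Let $(R,I)$ be a bounded prism and $f:(A,J)\to(A',J')$ a morphism of $\delta$-pairs over $(R,I)$ such that $A/(pR+I)^nA\to A'/(pR+I)^nA'$ is étale for every $n\ge1$ and $f$ induces an isomorphism $A/J\xrightarrow{\sim}A'/J'$. Then $(A,J)$ has a bounded prismatic envelope $(D,ID)$ over $(R,I)$ if and only if $(A',J')$ has a bounded prismatic envelope $(D',ID')$ over $(R,I)$; when these hold, the morphism $(D,ID)\to(D',ID')$ induced by $f$ is an isomorphism.
   Context: $p$ a fixed prime; $\delta$-rings: $\delta(0)=\delta(1)=0$, $\delta(x+y)=\delta(x)+\delta(y)-\sum_{i=1}^{p-1}\frac1p\binom pi x^iy^{p-i}$, $\delta(xy)=\delta(x)y^p+x^p\delta(y)+p\delta(x)\delta(y)$, $\varphi(x)=x^p+p\delta(x)$. A $\delta$-pair is a $\delta$-ring with an ideal; a morphism of $\delta$-pairs $(A,J)\to(B,K)$ is a $\delta$-homomorphism with $J\mapsto K$. A bounded prism is a $\delta$-pair $(R,I)$ with $I$ invertible, $R$ $(pR+I)$-adically complete and separated, $p\in I+\varphi(I)R$, $(R/I)[p^\infty]=(R/I)[p^N]$ for some $N$. A $\delta$-pair over $(R,I)$ is one equipped with a morphism from $(R,I)$; a bounded prism over $(R,I)$ is a bounded prism $(B,IB)$ with such a morphism. A bounded prismatic envelope of $(A,J)$ over $(R,I)$ is a bounded prism $(D,ID)$ over $(R,I)$ with a morphism of $\delta$-pairs $g:(A,J)\to(D,ID)$ over $(R,I)$ such that every morphism of $\delta$-pairs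 $h:(A,J)\to(B,IB)$ over $(R,I)$ to a bounded prism over $(R,I)$ factors as $h=k\circ g$ for a unique morphism $k$ of bounded prisms over $(R,I)$. *)

(* Defs.v *)
From HB Require Import structures.
From mathcomp Require Import all_boot all_order all_algebra.

Set Implicit Arguments.
Unset Strict Implicit.
Unset Printing Implicit Defensive.

Import Order.TTheory GRing.Theory Num.Theory.
Local Open Scope ring_scope.

(* Ideals, represented as Prop-valued predicates on a commutative ring *)
(* (zero rings are allowed: we use comPzRingType throughout).          *)

Definition ideal_of (A : comPzRingType) (J : A -> Prop) : Prop :=
  [/\ J 0, (forall x y, J x -> J y -> J (x + y)) & (forall a x, J x -> J (a * x))].

Definition ideal_gen (A : comPzRingType) (S : A -> Prop) : A -> Prop :=
  fun x => exists (n : nat) (r s : 'I_n -> A),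
    (forall i, S (s i)) /\ x = \sum_(i < n) r i * s i.

Definition ext_ideal (A B : comPzRingType) (g : A -> B) (J : A -> Prop) : B -> Prop :=
  ideal_gen (fun y => exists x, J x /\ y = g x).

Definition ideal_add (A : comPzRingType) (J K : A -> Prop) : A -> Prop :=
  fun x => exists y z, J y /\ K z /\ x = y + z.

Definition pideal (p : nat) (A : comPzRingType) : A -> Prop :=
  fun x => exists r, x = p%:R * r.
Arguments pideal p A : clear implicits.

Definition idpow (A : comPzRingType) (J : A -> Prop) (n : nat) : A -> Prop :=
  ideal_gen (fun y => exists t : 'I_n -> A, (forall i, J (t i)) /\ y = \prod_(i < n) t i).

(* A is J-adically complete and separated: A -> lim A/J^n is bijective. *)
Definition adic_complete (A : comPzRingType) (J : A -> Prop) : Prop :=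
  (forall x : A, (forall n, idpow J n x) -> x = 0) /\
  (forall u : nat -> A, (forall n, idpow J n (u n.+1 - u n)) ->
     exists x : A, forall n, idpow J n (x - u n)).

(* Invertible ideal (= defines an effective Cartier divisor): there is a
   cover of Spec A by D(s_i) such that on each D(s_i) the ideal is generated
   by a nonzerodivisor d_i; written out elementwise for the localizations. *)
Definition invertible_ideal (A : comPzRingType) (K : A -> Prop) : Prop :=
  exists (n : nat) (s d c : 'I_n -> A),
    \sum_(i < n) c i * s i = 1 /\
    forall i, [/\ K (d i),
      (forall x, K x -> exists (k : nat) (y : A), s i ^+ k * x = d i * y) &
      (forall y, d i * y = 0 -> exists k : nat, s i ^+ k * y = 0)].

Definition is_delta (p : nat) (A : comPzRingType) (d : A -> A) : Prop :=
  [/\ d 0 = 0, d 1 = 0,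
    (forall x y, d (x + y) = d x + d y
        - \sum_(1 <= i < p) ('C(p, i) %/ p)%:R * x ^+ i * y ^+ (p - i)) &
    (forall x y, d (x * y) = d x * y ^+ p + x ^+ p * d y + p%:R * d x * d y)].

Definition frob (p : nat) (A : comPzRingType) (d : A -> A) (x : A) : A :=
  x ^+ p + p%:R * d x.

Definition delta_hom (A B : comPzRingType) (dA : A -> A) (dB : B -> B) (g : A -> B) : Prop :=
  forall x, g (dA x) = dB (g x).

Definition is_bounded_prism (p : nat) (B : comPzRingType) (dB : B -> B) (K : B -> Prop) : Prop :=
  [/\ is_delta p dB, ideal_of K, invertible_ideal K,
      adic_complete (ideal_add (pideal p B) K) &
      ideal_add K (ideal_gen (fun y => exists x, K x /\ y = frob p dB x)) (p%:R : B) /\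
      exists N : nat, forall (x : B) (k : nat),
        K ((p%:R : B) ^+ k * x) -> K ((p%:R : B) ^+ N * x)].

Definition dpair_over (p : nat) (R : comPzRingType) (dR : R -> R) (I : R -> Prop)
    (A : comPzRingType) (dA : A -> A) (sA : {rmorphism R -> A}) (J : A -> Prop) : Prop :=
  [/\ is_delta p dA, ideal_of J, delta_hom dR dA sA & forall x, I x -> J (sA x)].

Definition bprism_over (p : nat) (R : comPzRingType) (dR : R -> R) (I : R -> Prop)
    (B : comPzRingType) (dB : B -> B) (sB : {rmorphism R -> B}) : Prop :=
  [/\ is_delta p dB, delta_hom dR dB sB & is_bounded_prism p dB (ext_ideal sB I)].

Definition dmor_over (R A B : comPzRingType)
    (dA : A -> A) (sA : {rmorphism R -> A}) (J : A -> Prop)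
    (dB : B -> B) (sB : {rmorphism R -> B}) (K : B -> Prop)
    (h : {rmorphism A -> B}) : Prop :=
  [/\ delta_hom dA dB h, (forall x, J x -> K (h x)) & (forall r, h (sA r) = sB r)].

Definition is_envelope (p : nat) (R : comPzRingType) (dR : R -> R) (I : R -> Prop)
    (A : comPzRingType) (dA : A -> A) (sA : {rmorphism R -> A}) (J : A -> Prop)
    (D : comPzRingType) (dD : D -> D) (sD : {rmorphism R -> D})
    (g : {rmorphism A -> D}) : Prop :=
  [/\ bprism_over p dR I dD sD,
      dmor_over dA sA J dD sD (ext_ideal sD I) g &
      forall (B : comPzRingType) (dB : B -> B) (sB : {rmorphism R -> B}),
        bprism_over p dR I dB sB ->
        forall h : {rmorphism A -> B}, dmor_over dA sA J dB sB (ext_ideal sB I) h ->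
        (exists k : {rmorphism D -> B},
            dmor_over dD sD (ext_ideal sD I) dB sB (ext_ideal sB I) k /\
            forall x, h x = k (g x)) /\
        (forall k1 k2 : {rmorphism D -> B},
            dmor_over dD sD (ext_ideal sD I) dB sB (ext_ideal sB I) k1 ->
            (forall x, h x = k1 (g x)) ->
            dmor_over dD sD (ext_ideal sD I) dB sB (ext_ideal sB I) k2 ->
            (forall x, h x = k2 (g x)) ->
            forall y, k1 y = k2 y)].

Definition has_envelope (p : nat) (R : comPzRingType) (dR : R -> R) (I : R -> Prop)
    (A : comPzRingType) (dA : A -> A) (sA : {rmorphism R -> A}) (J : A -> Prop) : Prop :=
  exists (D : comPzRingType) (dD : D -> D) (sD : {rmorphism R -> D})
         (g : {rmorphism A -> D}), is_envelope p dR I dA sA J dD sD g.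

(* Etaleness of the induced map A/K -> A'/K' (for f : A -> A' with     *)
(* f(K) contained in K'), without forming quotient rings:              *)
(* etale := finitely presented + formally etale (EGA IV 17.3.1 /       *)
(* Stacks 00UR).                                                        *)

(* evaluation of a polynomial in A[x_0..x_{m-1}], given as a list of
   terms (coefficient, exponent vector), along u : A -> C at c *)
Definition poly_ev (A C : comPzRingType) (u : A -> C) (m : nat) (c : 'I_m -> C)
    (P : seq (A * ('I_m -> nat))) : C :=
  \sum_(t <- P) u t.1 * \prod_(i < m) c i ^+ t.2 i.

(* A'/K' is a finitely presented A/K-algebra: there are generators a and
   finitely many relations g in A[x] such that A'/K' represents the functor
   C |-> {A/K-algebra points c of C with g(c) = 0}, i.e.
   A'/K' ~= (A/K)[x_0..x_{m-1}]/(g_0,...,g_{k-1}). *)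
Definition fp_mod (A A' : comPzRingType) (f : {rmorphism A -> A'})
    (K : A -> Prop) (K' : A' -> Prop) : Prop :=
  exists (m : nat) (a : 'I_m -> A') (k : nat) (g : 'I_k -> seq (A * ('I_m -> nat))),
    (forall j, K' (poly_ev f a (g j))) /\
    forall (C : comPzRingType) (u : {rmorphism A -> C}) (c : 'I_m -> C),
      (forall x, K x -> u x = 0) -> (forall j, poly_ev u c (g j) = 0) ->
      (exists w : {rmorphism A' -> C},
          [/\ forall y, K' y -> w y = 0, forall x, w (f x) = u x & forall i, w (a i) = c i]) /\
      (forall w1 w2 : {rmorphism A' -> C},
          [/\ forall y, K' y -> w1 y = 0, forall x, w1 (f x) = u x & forall i, w1 (a i) = c i] ->
          [/\ forall y, K' y -> w2 y = 0, forall x, w2 (f x) = u x & forall i, w2 (a i) = c i] ->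
          forall y, w1 y = w2 y).

(* A/K -> A'/K' is formally etale: for every ring C with a square-zero ideal
   N, every ring map u : A/K -> C and every ring map v : A'/K' -> C/N
   compatible with u, there is a unique lift w : A'/K' -> C.  Maps into C/N
   are represented by functions A' -> C that are ring maps modulo N. *)
Definition formally_etale_mod (A A' : comPzRingType) (f : {rmorphism A -> A'})
    (K : A -> Prop) (K' : A' -> Prop) : Prop :=
  forall (C : comPzRingType) (N : C -> Prop),
    ideal_of N -> (forall x y, N x -> N y -> x * y = 0) ->
    forall (u : {rmorphism A -> C}) (v : A' -> C),
      (forall x, K x -> u x = 0) ->
      (forall y z, N (v (y + z) - (v y + v z))) ->
      (forall y z, N (v (y * z) - v y * v z)) ->
      N (v 1 - 1) ->
      (forall y, K' y -> N (v y)) ->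
      (forall x, N (v (f x) - u x)) ->
      (exists w : {rmorphism A' -> C},
          [/\ forall y, K' y -> w y = 0, forall x, w (f x) = u x & forall y, N (w y - v y)]) /\
      (forall w1 w2 : {rmorphism A' -> C},
          [/\ forall y, K' y -> w1 y = 0, forall x, w1 (f x) = u x & forall y, N (w1 y - v y)] ->
          [/\ forall y, K' y -> w2 y = 0, forall x, w2 (f x) = u x & forall y, N (w2 y - v y)] ->
          forall y, w1 y = w2 y).

Definition etale_mod (A A' : comPzRingType) (f : {rmorphism A -> A'})
    (K : A -> Prop) (K' : A' -> Prop) : Prop :=
  fp_mod f K K' /\ formally_etale_mod f K K'.

(* Main.v *)
Require Import Defs.
From HB Require Import structures.
From mathcomp Require Import all_boot all_order all_algebra.
From mathcomp Require Import ring zify.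
From Stdlib Require Import Lia.
From Stdlib Require Import Classical ClassicalEpsilon FunctionalExtensionality PropExtensionality.
Import GRing.Theory.
Local Open Scope ring_scope.
Set Implicit Arguments.
Unset Strict Implicit.
Unset Printing Implicit Defensive.
Section IdealFacts.
Variables (E : comPzRingType) (M : E -> Prop).
Hypothesis hM : ideal_of M.
Lemma id0 : M 0. Proof. by case: hM. Qed.
Lemma idD x y : M x -> M y -> M (x + y). Proof. by case: hM => _ h _; apply: h. Qed.
Lemma idMl a x : M x -> M (a * x). Proof. by case: hM => _ _ h; apply: h. Qed.
Lemma idMr a x : M x -> M (x * a). Proof. by rewrite mulrC; apply: idMl. Qed.
Lemma idN x : M x -> M (- x). Proof. by move=> h; rewrite -mulN1r; apply: idMl. Qed.
Lemma idB x y : M x -> M y -> M (x - y). Proof. by move=> hx hy; apply: idD => //; apply: idN. Qed.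
Lemma idNE x : M (- x) -> M x. Proof. by move/idN; rewrite opprK. Qed.
Lemma idBC x y : M (x - y) -> M (y - x). Proof. by move/idN; rewrite opprB. Qed.
Lemma idBT x y z : M (x - y) -> M (y - z) -> M (x - z).
Proof. by move=> h1 h2; have := idD h1 h2; rewrite addrA subrK. Qed.
End IdealFacts.

Definition rep (E : comPzRingType) (M : E -> Prop) (x : E) : E :=
  epsilon (inhabits 0) (fun y => M (y - x)).

Section RepFacts.
Variables (E : comPzRingType) (M : E -> Prop).
Hypothesis hM : ideal_of M.
Lemma repP x : M (rep M x - x).
Proof.
rewrite /rep; apply: (epsilon_spec (inhabits 0) (fun y => M (y - x))).
by exists x; rewrite subrr; apply: id0.
Qed.
Lemma rep_eq x y : M (x - y) -> rep M x = rep M y.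
Proof.
move=> h; rewrite /rep; congr epsilon; apply: functional_extensionality => z.
apply: propositional_extensionality; split => hz.
- by move: (idD hM hz h); rewrite addrA subrK.
- by move: (idD hM hz (idBC hM h)); rewrite addrA subrK.
Qed.
Lemma rep_eqM x y : rep M x = rep M y -> M (x - y).
Proof.
move=> h; apply: (idBT hM (idBC hM (repP x))); rewrite h; exact: repP.
Qed.
Lemma rep_idem x : rep M (rep M x) = rep M x.
Proof. exact: rep_eq (repP x). Qed.
End RepFacts.

Definition Qt (E : comPzRingType) (M : E -> Prop) (hM : ideal_of M) :=
  {x : E | rep M x == x}.
HB.instance Definition _ E M hM := Choice.copy (@Qt E M hM) {x : E | rep M x == x}.

Section QuotRing.
Variables (E : comPzRingType) (M : E -> Prop) (hM : ideal_of M).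
Local Notation Q := (Qt hM).
Definition qc (x : E) : Q := exist _ (rep M x) (introT eqP (rep_idem hM x)).
Definition qv (q : Q) : E := sval q.
Lemma qvK q : qc (qv q) = q.
Proof. case: q => x hx; apply: val_inj => /=; exact/eqP. Qed.
Lemma qv_qc x : qv (qc x) = rep M x. Proof. by []. Qed.
Lemma qc_eq x y : M (x - y) -> qc x = qc y.
Proof. by move=> h; apply: val_inj => /=; apply: rep_eq. Qed.
Lemma qc_eqM x y : qc x = qc y -> M (x - y).
Proof. by move=> h; apply: (rep_eqM hM); move: (congr1 qv h). Qed.
Lemma qvP x : M (qv (qc x) - x). Proof. exact: repP. Qed.

Definition qadd (a b : Q) : Q := qc (qv a + qv b).
Definition qopp (a : Q) : Q := qc (- qv a).
Definition qmul (a b : Q) : Q := qc (qv a * qv b).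
Definition qzero : Q := qc 0.
Definition qone : Q := qc 1.

Lemma qaddE x y : qadd (qc x) (qc y) = qc (x + y).
Proof.
apply: qc_eq; rewrite opprD addrACA; apply: (idD hM); [exact: qvP| exact: qvP].
Qed.
Lemma qoppE x : qopp (qc x) = qc (- x).
Proof. apply: qc_eq; rewrite -opprD; apply: (idN hM); exact: qvP. Qed.
Lemma qmulE x y : qmul (qc x) (qc y) = qc (x * y).
Proof.
apply: qc_eq.
have -> : qv (qc x) * qv (qc y) - x * y =
   (qv (qc x) - x) * qv (qc y) + x * (qv (qc y) - y).
  by rewrite mulrBl mulrBr addrA subrK.
apply: (idD hM); [apply: (idMr hM) | apply: (idMl hM)]; exact: qvP.
Qed.

Lemma qaddA : associative qadd.
Proof. by move=> a b c; rewrite -[a]qvK -[b]qvK -[c]qvK !qaddE addrA. Qed.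
Lemma qaddC : commutative qadd.
Proof. by move=> a b; rewrite -[a]qvK -[b]qvK !qaddE addrC. Qed.
Lemma qadd0 : left_id qzero qadd.
Proof. by move=> a; rewrite -[a]qvK /qzero qaddE add0r. Qed.
Lemma qaddN : left_inverse qzero qopp qadd.
Proof. by move=> a; rewrite -[a]qvK qoppE qaddE addNr. Qed.
HB.instance Definition _ := GRing.isZmodule.Build Q qaddA qaddC qadd0 qaddN.
Lemma qmulA : associative qmul.
Proof. by move=> a b c; rewrite -[a]qvK -[b]qvK -[c]qvK !qmulE mulrA. Qed.
Lemma qmulC : commutative qmul.
Proof. by move=> a b; rewrite -[a]qvK -[b]qvK !qmulE mulrC. Qed.
Lemma qmul1 : left_id qone qmul.
Proof. by move=> a; rewrite -[a]qvK /qone qmulE mul1r. Qed.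
Lemma qmulD : left_distributive qmul qadd.
Proof. by move=> a b c; rewrite -[a]qvK -[b]qvK -[c]qvK qaddE !qmulE qaddE mulrDl. Qed.
HB.instance Definition _ := GRing.Zmodule_isComPzRing.Build Q qmulA qmulC qmul1 qmulD.
End QuotRing.

Definition mkRM (R S : comPzRingType) (f : R -> S) (h0 : f 0 = 0)
  (hD : forall x y, f (x+y) = f x + f y) (h1 : f 1 = 1)
  (hM : forall x y, f (x*y) = f x * f y) : {rmorphism R -> S} :=
  HB.pack f (GRing.isNmodMorphism.Build _ _ f (h0, hD))
            (GRing.isMonoidMorphism.Build _ _ f (h1, hM)).

Lemma mkRME R S f h0 hD h1 hM x : @mkRM R S f h0 hD h1 hM x = f x.
Proof. by []. Qed.

Definition rmod (A E : comPzRingType) (M : E -> Prop) (w : A -> E) : Prop :=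
  [/\ forall y z, M (w (y + z) - (w y + w z)),
      forall y z, M (w (y * z) - w y * w z) & M (w 1 - 1)].

Lemma rmorph_rmod (A E : comPzRingType) (M : E -> Prop) (hM : ideal_of M)
  (w : {rmorphism A -> E}) : rmod M w.
Proof. by split=> *; rewrite ?rmorphD ?rmorphM ?rmorph1 subrr; apply: id0. Qed.

Section QuotMaps.
Variables (E : comPzRingType) (M : E -> Prop) (hM : ideal_of M).
Local Notation Q := (Qt hM).

Lemma qcD x y : qc hM (x + y) = qc hM x + qc hM y. Proof. by rewrite -qaddE. Qed.
Lemma qcM x y : qc hM (x * y) = qc hM x * qc hM y. Proof. by rewrite -qmulE. Qed.
Lemma qc0 : qc hM 0 = 0. Proof. by []. Qed.
Lemma qc1 : qc hM 1 = 1. Proof. by []. Qed.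
Definition qcR : {rmorphism E -> Q} := mkRM qc0 qcD qc1 qcM.
Lemma qcRE x : qcR x = qc hM x. Proof. by []. Qed.
Lemma qcB x y : qc hM x - qc hM y = qc hM (x - y).
Proof. by rewrite -!qcRE rmorphB. Qed.
Lemma qc_eq0 x : qc hM x = 0 <-> M x.
Proof.
split=> [h | h]; first by have := qc_eqM (h : qc hM x = qc hM 0); rewrite subr0.
by apply: qc_eq; rewrite subr0.
Qed.
Lemma qvD (a b : Q) : M (qv (a + b) - (qv a + qv b)). Proof. exact: qvP. Qed.
Lemma qvM (a b : Q) : M (qv (a * b) - qv a * qv b). Proof. exact: qvP. Qed.
Lemma qv1 : M (qv (1 : Q) - 1). Proof. exact: qvP. Qed.
Lemma qv0 : M (qv (0 : Q)). Proof. by have := qvP hM 0; rewrite subr0. Qed.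
Lemma qvB (a b : Q) : M (qv (a - b) - (qv a - qv b)).
Proof.
have h1 := qvD a (- b).
have h2 : M (qv (- b) + qv b).
  by have := qvP hM (- qv b); rewrite opprK.
have -> : qv (a - b) - (qv a - qv b) = (qv (a - b) - (qv a + qv (- b))) + (qv (- b) + qv b).
  by ring.
by apply: idD.
Qed.

Lemma rmodD (A : comPzRingType) (w : A -> E) : rmod M w -> forall y z, M (w (y + z) - (w y + w z)).
Proof. by case. Qed.
Lemma rmodM (A : comPzRingType) (w : A -> E) : rmod M w -> forall y z, M (w (y * z) - w y * w z).
Proof. by case. Qed.
Lemma rmod1 (A : comPzRingType) (w : A -> E) : rmod M w -> M (w 1 - 1).
Proof. by case. Qed.
Section LiftQ.
Variables (A : comPzRingType) (w : A -> E) (hw : rmod M w).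
Lemma liftQ0 : qc hM (w 0) = 0.
Proof.
apply/qc_eq0; have := rmodD hw 0 0; rewrite addr0 opprD addrA subrr add0r.
by move/(idN hM); rewrite opprK.
Qed.
Lemma liftQD y z : qc hM (w (y + z)) = qc hM (w y) + qc hM (w z).
Proof. by rewrite -qcD; apply: qc_eq; apply: rmodD. Qed.
Lemma liftQ1 : qc hM (w 1) = 1.
Proof. by apply: qc_eq; apply: rmod1. Qed.
Lemma liftQM y z : qc hM (w (y * z)) = qc hM (w y) * qc hM (w z).
Proof. by rewrite -qcM; apply: qc_eq; apply: rmodM. Qed.
End LiftQ.
Definition liftQ (A : comPzRingType) (w : A -> E) (hw : rmod M w) : {rmorphism A -> Q} :=
  @mkRM A Q (fun y => qc hM (w y)) (liftQ0 hw) (liftQD hw) (liftQ1 hw) (liftQM hw).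
Lemma liftQE A w hw y : @liftQ A w hw y = qc hM (w y).
Proof. reflexivity. Qed.

Variable N : E -> Prop.
Hypotheses (hN : ideal_of N) (hMN : forall x, M x -> N x)
  (hNN : forall x y, N x -> N y -> M (x * y)).
Definition NQ : Q -> Prop := fun q => N (qv q).
Lemma NQ_qc x : NQ (qc hM x) <-> N x.
Proof.
rewrite /NQ; split=> h.
- by have := idB hN h (hMN (qvP hM x)); rewrite opprB addrC subrK.
- by have := idD hN h (hMN (qvP hM x)); rewrite addrC subrK.
Qed.
Lemma NQ_ideal : ideal_of NQ.
Proof.
split.
- exact: hMN qv0.
- move=> a b ha hb; rewrite /NQ.
  by have := idD hN (hMN (qvD a b)) (idD hN ha hb); rewrite subrK.
- move=> a b hb; rewrite /NQ.
  by have := idD hN (hMN (qvM a b)) (idMl hN (qv a) hb); rewrite subrK.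
Qed.
Lemma NQ_sq a b : NQ a -> NQ b -> a * b = 0.
Proof.
move=> ha hb; rewrite -[a]qvK -[b]qvK -qcM; apply/qc_eq0; exact: hNN.
Qed.
End QuotMaps.

Section FormalEtale.
Variables (A A' : comPzRingType) (f : {rmorphism A -> A'}) (K : A -> Prop) (K' : A' -> Prop).
Hypothesis hfe : formally_etale_mod f K K'.
Hypothesis hKK : forall x, K x -> K' (f x).
Variables (E : comPzRingType) (M N : E -> Prop).
Hypotheses (hM : ideal_of M) (hN : ideal_of N) (hMN : forall x, M x -> N x)
  (hNN : forall x y, N x -> N y -> M (x * y)).

Lemma fe_uniq (w1 w2 : A' -> E) (r1 : rmod M w1) (r2 : rmod M w2)
  (k1 : forall y, K' y -> M (w1 y)) (k2 : forall y, K' y -> M (w2 y))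
  (hf : forall x, M (w1 (f x) - w2 (f x))) (hd : forall y, N (w1 y - w2 y)) :
  forall y, M (w1 y - w2 y).
Proof.
pose W1 := liftQ hM r1; pose W2 := liftQ hM r2.
pose U : {rmorphism A -> Qt hM} := (W1 \o f)%FUN.
have W1E : forall y, W1 y = qc hM (w1 y) by [].
have W2E : forall y, W2 y = qc hM (w2 y) by [].
have UE : forall x, U x = qc hM (w1 (f x)) by [].
have hNQ := NQ_ideal hM hN hMN.
have h1 : forall x, K x -> U x = 0.
  by move=> x hx; rewrite UE; apply/qc_eq0; apply: k1; apply: hKK.
have h2 : forall y z, (@NQ _ _ hM N) (W1 (y + z) - (W1 y + W1 z)).
  by move=> y z; rewrite rmorphD subrr; case: hNQ.
have h3 : forall y z, (@NQ _ _ hM N) (W1 (y * z) - W1 y * W1 z).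
  by move=> y z; rewrite rmorphM subrr; case: hNQ.
have h4 : (@NQ _ _ hM N) (W1 1 - 1) by rewrite rmorph1 subrr; case: hNQ.
have h5 : forall y, K' y -> (@NQ _ _ hM N) (W1 y).
  by move=> y hy; rewrite W1E; apply/(NQ_qc hM hN hMN); apply: hMN; exact: k1.
have h6 : forall x, (@NQ _ _ hM N) (W1 (f x) - U x) by move=> x; rewrite subrr; case: hNQ.
have [_ huniq] := hfe hNQ (NQ_sq hNN) h1 h2 h3 h4 h5 h6.
have e := huniq W1 W2.
move=> y; apply: (qc_eqM (hM := hM)); rewrite -W1E -W2E; apply: e.
- split=> // [z hz | z]; last by rewrite subrr; case: hNQ.
  by rewrite W1E; apply/qc_eq0; apply: k1.
- split=> [z hz | x | z].
  + by rewrite W2E; apply/qc_eq0; apply: k2.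
  + by rewrite W2E UE; apply: qc_eq; apply: (idBC hM); apply: hf.
  + rewrite W1E W2E -!qcRE -rmorphB qcRE.
    apply/(NQ_qc hM hN hMN); apply: (idBC hN); exact: hd.
Qed.

Lemma fe_exist (u : A -> E) (ru : rmod M u) (ku : forall x, K x -> M (u x))
  (v : A' -> E) (rv : rmod N v) (kv : forall y, K' y -> N (v y))
  (hvu : forall x, N (v (f x) - u x)) :
  exists w : A' -> E, [/\ rmod M w, (forall y, K' y -> M (w y)),
    (forall x, M (w (f x) - u x)) & (forall y, N (w y - v y))].
Proof.
pose U := liftQ hM ru.
have UE : forall x, U x = qc hM (u x) by [].
pose V := fun y => qc hM (v y).
have hNQ := NQ_ideal hM hN hMN.
have h1 : forall x, K x -> U x = 0.
  by move=> x hx; rewrite UE; apply/qc_eq0; apply: ku.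
have h2 : forall y z, (@NQ _ _ hM N) (V (y + z) - (V y + V z)).
  move=> y z; rewrite /V -qcD qcB.
  apply/(NQ_qc hM hN hMN); exact: (rmodD rv).
have h3 : forall y z, (@NQ _ _ hM N) (V (y * z) - V y * V z).
  move=> y z; rewrite /V -qcM qcB.
  apply/(NQ_qc hM hN hMN); exact: (rmodM rv).
have h4 : (@NQ _ _ hM N) (V 1 - 1).
  rewrite /V -qc1 qcB.
  apply/(NQ_qc hM hN hMN); exact: (rmod1 rv).
have h5 : forall y, K' y -> (@NQ _ _ hM N) (V y).
  by move=> y hy; apply/(NQ_qc hM hN hMN); apply: kv.
have h6 : forall x, (@NQ _ _ hM N) (V (f x) - U x).
  move=> x; rewrite /V UE qcB.
  apply/(NQ_qc hM hN hMN); exact: hvu.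
have [[W [Wk Wf WN]] _] := hfe hNQ (NQ_sq hNN) h1 h2 h3 h4 h5 h6.
exists (fun y => qv (W y)); split.
- split=> [y z | y z |]; rewrite ?rmorphD ?rmorphM ?rmorph1.
  + exact: qvD.
  + exact: qvM.
  + exact: qv1.
- by move=> y hy; rewrite (Wk y hy); exact: (qv0 hM).
- by move=> x; rewrite Wf UE; exact: qvP.
- move=> y; have hc := WN y; rewrite /NQ in hc.
  have hb := hMN (qvB (W y) (V y)).
  have hv := hMN (qvP hM (v y)).
  have -> : qv (W y) - v y = qv (W y - V y) - (qv (W y - V y) - (qv (W y) - qv (V y)))
     + (qv (qc hM (v y)) - v y) by rewrite /V; ring.
  by apply: (idD hN) => //; apply: (idB hN).
Qed.
End FormalEtale.

Lemma choiceF (T U : Type) (P : T -> U -> Prop) :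
  (forall t, exists u, P t u) -> exists g : T -> U, forall t, P t (g t).
Proof.
move=> H; exists (fun t => proj1_sig (constructive_indefinite_description _ (H t))).
by move=> t; exact: proj2_sig (constructive_indefinite_description _ (H t)).
Qed.

Definition catf (T : Type) (n1 n2 : nat) (r1 : 'I_n1 -> T) (r2 : 'I_n2 -> T)
  (i : 'I_(n1 + n2)) : T :=
  match split i with inl j => r1 j | inr j => r2 j end.
Lemma catfL T n1 n2 r1 r2 (j : 'I_n1) : @catf T n1 n2 r1 r2 (lshift n2 j) = r1 j.
Proof. by rewrite /catf (unsplitK (inl _ j)). Qed.
Lemma catfR T n1 n2 r1 r2 (j : 'I_n2) : @catf T n1 n2 r1 r2 (rshift n1 j) = r2 j.
Proof. by rewrite /catf (unsplitK (inr _ j)). Qed.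

Section Gen.
Variable B : comPzRingType.
Implicit Types S T : B -> Prop.

Lemma gen_ideal S : ideal_of (ideal_gen S).
Proof.
split.
- exists 0%N, (fun _ => 0), (fun _ => 0); split; [by case | by rewrite big_ord0].
- move=> x y [n1 [r1 [s1 [h1 ->]]]] [n2 [r2 [s2 [h2 ->]]]].
  exists (n1 + n2)%N, (catf r1 r2), (catf s1 s2); split.
  + by move=> i; rewrite /catf; case: (split i).
  + by rewrite big_split_ord /=; congr (_ + _); apply: eq_bigr => i _;
      rewrite ?catfL ?catfR.
- move=> a x [n [r [s [h ->]]]]; exists n, (fun i => a * r i), s; split => //.
  by rewrite mulr_sumr; apply: eq_bigr => i _; rewrite mulrA.
Qed.

Lemma gen_sub S x : S x -> ideal_gen S x.
Proof.
move=> h; exists 1%N, (fun _ => 1), (fun _ => x); split => //.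
by rewrite big_ord1 mul1r.
Qed.

Lemma gen_min S T : ideal_of T -> (forall x, S x -> T x) ->
  forall x, ideal_gen S x -> T x.
Proof.
move=> hT hST x [n [r [s [h ->]]]].
apply: (big_ind T); [exact: id0 | exact: idD | ].
by move=> i _; apply: idMl => //; apply: hST.
Qed.

Lemma gen_mono S T : (forall x, S x -> T x) -> forall x, ideal_gen S x -> ideal_gen T x.
Proof.
move=> h; apply: gen_min; first exact: gen_ideal.
by move=> x hx; apply: gen_sub; apply: h.
Qed.

Lemma gen_id S : ideal_of S -> forall x, ideal_gen S x -> S x.
Proof. by move=> hS; apply: gen_min. Qed.

Lemma add_ideal S T : ideal_of S -> ideal_of T -> ideal_of (ideal_add S T).
Proof.
move=> hS hT; split.
- by exists 0, 0; rewrite addr0; split => //; [exact: id0 | split => //; exact: id0].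
- move=> x y [a [b [ha [hb ->]]]] [c [d [hc [hd ->]]]].
  exists (a + c), (b + d); split; first exact: idD.
  by split; [exact: idD | rewrite addrACA].
- move=> r x [a [b [ha [hb ->]]]]; exists (r * a), (r * b); split; first exact: idMl.
  by split; [exact: idMl | rewrite mulrDr].
Qed.

Lemma add_l S T x : ideal_of T -> S x -> ideal_add S T x.
Proof. by move=> hT hx; exists x, 0; rewrite addr0; split => //; split => //; exact: id0. Qed.
Lemma add_r S T x : ideal_of S -> T x -> ideal_add S T x.
Proof. by move=> hS hx; exists 0, x; rewrite add0r; split => //; exact: id0. Qed.

Lemma pideal_ideal p : ideal_of (pideal p B).
Proof.
split.
- by exists 0; rewrite mulr0.
- by move=> x y [a ->] [b ->]; exists (a + b); rewrite mulrDr.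
- by move=> a x [b ->]; exists (a * b); rewrite mulrCA.
Qed.

Definition pgen S n : B -> Prop :=
  fun y => exists t : 'I_n -> B, (forall i, S (t i)) /\ y = \prod_(i < n) t i.

Lemma idpow_ideal S n : ideal_of (idpow S n).
Proof. exact: gen_ideal. Qed.

Lemma idpow0 S x : idpow S 0 x.
Proof.
have -> : x = x * 1 by rewrite mulr1.
apply: idMl; first exact: idpow_ideal.
apply: gen_sub; exists (fun _ => 0); split; first by case.
by rewrite big_ord0.
Qed.

Lemma idpowM S a b x y : idpow S a x -> idpow S b y -> idpow S (a + b) (x * y).
Proof.
move=> hx hy.
have hI := idpow_ideal S (a + b).
pose T1 := fun x => forall y, pgen S b y -> idpow S (a + b) (x * y).
have h1 : forall x, idpow S a x -> T1 x.
  apply: gen_min.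
  - split.
    + by move=> y0 _; rewrite mul0r; exact: id0.
    + by move=> u v hu hv y0 hy0; rewrite mulrDl; apply: idD => //; [apply: hu | apply: hv].
    + by move=> r u hu y0 hy0; rewrite -mulrA; apply: idMl => //; apply: hu.
  - move=> u [t [ht ->]] y0 [t' [ht' ->]]; apply: gen_sub.
    exists (catf t t'); split.
    + by move=> i; rewrite /catf; case: (split i).
    + by rewrite big_split_ord /=; congr (_ * _); apply: eq_bigr => i _;
        rewrite ?catfL ?catfR.
pose T2 := fun y => idpow S (a + b) (x * y).
have : forall y, idpow S b y -> T2 y.
  apply: gen_min.
  - split.
    + by rewrite /T2 mulr0; exact: id0.
    + by move=> u v hu hv; rewrite /T2 mulrDr; apply: idD.
    + by move=> r u hu; rewrite /T2 mulrCA; apply: idMl.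
  - by move=> u hu; apply: h1.
by apply.
Qed.

Lemma idpowS S n x : idpow S n.+1 x -> idpow S n x.
Proof.
apply: gen_min; first exact: idpow_ideal.
move=> y [t [ht ->]]; rewrite big_ord_recr /=.
apply: idMr; first exact: idpow_ideal.
by apply: gen_sub; exists (fun i => t (widen_ord (leqnSn n) i)); split.
Qed.

Lemma idpow_le S m n x : (m <= n)%N -> idpow S n x -> idpow S m x.
Proof.
move=> /subnK <-; elim: (n - m)%N => [|k IH] //= h.
by apply: IH; apply: idpowS.
Qed.

Lemma idpow1 S x : ideal_of S -> idpow S 1 x <-> S x.
Proof.
move=> hS; split.
- apply: gen_min => // y [t [ht ->]]; rewrite big_ord1; exact: ht.
- by move=> hx; apply: gen_sub; exists (fun _ => x); split => //; rewrite big_ord1.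
Qed.

Lemma idpow_mono S T n x : (forall y, S y -> T y) -> idpow S n x -> idpow T n x.
Proof.
move=> h; apply: gen_mono => y [t [ht ->]]; exists t; split => // i; exact: h.
Qed.

Lemma idpowX S n x : S x -> idpow S n (x ^+ n).
Proof.
move=> hx; apply: gen_sub; exists (fun _ => x); split => //.
by rewrite prodr_const card_ord.
Qed.

Lemma idpowMS S n x y : ideal_of S -> idpow S n x -> S y -> idpow S n.+1 (x * y).
Proof. by move=> hS hx hy; rewrite -addn1; apply: idpowM => //; apply/idpow1. Qed.
End Gen.

Lemma idpow_img (B C : comPzRingType) (phi : {rmorphism B -> C}) (S : B -> Prop)
  (T : C -> Prop) n x : (forall y, S y -> T (phi y)) -> idpow S n x -> idpow T n (phi x).
Proof.
move=> h [m [r [s [hs ->]]]]; rewrite rmorph_sum.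
exists m, (fun i => phi (r i)), (fun i => phi (s i)); split.
- move=> i; case: (hs i) => t [ht ->]; exists (fun j => phi (t j)); split.
  + by move=> j; apply: h.
  + by rewrite rmorph_prod.
- by apply: eq_bigr => i _; rewrite rmorphM.
Qed.

Lemma ext_min (A B : comPzRingType) (g : A -> B) (J : A -> Prop) (T : B -> Prop) :
  ideal_of T -> (forall x, J x -> T (g x)) -> forall y, ext_ideal g J y -> T y.
Proof. by move=> hT h; apply: gen_min => // y [x [hx ->]]; apply: h. Qed.

Lemma ext_sub (A B : comPzRingType) (g : A -> B) (J : A -> Prop) x :
  J x -> ext_ideal g J (g x).
Proof. by move=> h; apply: gen_sub; exists x. Qed.

Lemma ext_ideal_ideal (A B : comPzRingType) (g : A -> B) (J : A -> Prop) :
  ideal_of (ext_ideal g J).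
Proof. exact: gen_ideal. Qed.

Definition wS (B : comPzRingType) (p : nat) (x y : B) : B :=
  \sum_(1 <= i < p) ('C(p, i) %/ p)%:R * x ^+ i * y ^+ (p - i).

Section WS.
Variables (B : comPzRingType) (p : nat).
Local Notation wS := (@wS B p).

Lemma wS_pow (hp : prime p) (x y : B) :
  (x + y) ^+ p = x ^+ p + y ^+ p + p%:R * wS x y.
Proof.
have p0 : (0 < p)%N by apply: prime_gt0.
move: (hp) (p0); rewrite /wS; case: p => [//|q] hq _.
rewrite addrC exprDn -(big_mkord xpredT (fun i => y ^+ (q.+1 - i) * x ^+ i *+ 'C(q.+1, i))) big_nat_recl // big_nat_recr //=.
rewrite big_add1 /= subn0 expr0 mulr1 bin0 mulr1n subnn expr0 mul1r binn mulr1n.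
set S1 := \sum_(0 <= i < q) _ *+ _.
set S2 := \sum_(0 <= i < q) _.
suff -> : S1 = q.+1%:R * S2 by ring.
rewrite /S1 /S2 mulr_sumr; apply: eq_big_nat => i /andP [_ hi].
have hd : (q.+1 %| 'C(q.+1, i.+1))%N by apply: prime_dvd_bin => //; rewrite ltnS hi.
rewrite [in LHS](_ : 'C(q.+1, i.+1) = ('C(q.+1, i.+1) %/ q.+1) * q.+1)%N; last by rewrite divnK.
rewrite -[LHS]mulr_natl natrM; ring.
Qed.

Lemma wS_mul (a x y : B) : wS (a * x) (a * y) = a ^+ p * wS x y.
Proof.
rewrite /wS mulr_sumr; apply: eq_big_nat => i /andP [_ hi].
rewrite !exprMn.
have -> : a ^+ p = a ^+ i * a ^+ (p - i) by rewrite -exprD subnKC // ltnW.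
ring.
Qed.

Lemma wS_fac (x y : B) : exists c, wS x y = x * y * c.
Proof.
exists (\sum_(1 <= i < p) ('C(p, i) %/ p)%:R * x ^+ i.-1 * y ^+ (p - i).-1).
rewrite /wS mulr_sumr; apply: eq_big_nat => i /andP [h1 h2].
have e1 : x ^+ i = x * x ^+ i.-1 by rewrite -exprS prednK.
have e2 : y ^+ (p - i) = y * y ^+ (p - i).-1 by rewrite -exprS prednK // subn_gt0.
by rewrite e1 e2; ring.
Qed.

Lemma wS_in (T : B -> Prop) (x y : B) : ideal_of T -> T (x * y) -> T (wS x y).
Proof. by move=> hT h; case: (wS_fac x y) => c ->; apply: idMr. Qed.


End WS.

Lemma wS_rmorph (B C : comPzRingType) (p : nat) (h : {rmorphism B -> C}) (x y : B) :
  h (wS p x y) = wS p (h x) (h y).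
Proof.
rewrite /wS rmorph_sum; apply: eq_bigr => i _.
by rewrite !rmorphM !rmorphXn rmorph_nat.
Qed.

Section DeltaFacts.
Variables (B : comPzRingType) (p : nat) (dB : B -> B) (hd : is_delta p dB).
Lemma dD (x y : B) : dB (x + y) = dB x + dB y - wS p x y. Proof. by case: hd. Qed.
Lemma dM (x y : B) : dB (x * y) = dB x * y ^+ p + x ^+ p * dB y + p%:R * dB x * dB y.
Proof. by case: hd. Qed.
Lemma d0 : dB 0 = 0. Proof. by case: hd. Qed.
Lemma d1 : dB 1 = 0. Proof. by case: hd. Qed.
Lemma wSd (x y : B) : wS p x y = dB x + dB y - dB (x + y).
Proof. by rewrite dD; ring. Qed.
Lemma wS_sym (x y : B) : wS p x y = wS p y x.
Proof. rewrite !wSd [y + x]addrC; ring. Qed.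
Lemma wS0l (y : B) : wS p 0 y = 0.
Proof. by rewrite wSd add0r d0 add0r subrr. Qed.
Lemma wS_assoc (x y z : B) : wS p x y + wS p (x + y) z = wS p y z + wS p x (y + z).
Proof. rewrite !wSd [x + (y + z)]addrA; ring. Qed.
End DeltaFacts.

(* ---------- length-2 Witt vectors of a delta-ring ---------- *)
Definition W2 (B : comPzRingType) (p : nat) (dB : B -> B) (hd : is_delta p dB)
  (hp : prime p) := (B * B)%type.
HB.instance Definition _ B p dB hd hp := Choice.copy (@W2 B p dB hd hp) (B * B)%type.

Section W2Ring.
Variables (B : comPzRingType) (p : nat) (dB : B -> B) (hd : is_delta p dB) (hp : prime p).
Local Notation W := (@W2 B p dB hd hp).
Local Notation S := (@wS B p).

Definition wadd (a b : W) : W := (a.1 + b.1, a.2 + b.2 - S a.1 b.1).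
Definition wopp (a : W) : W := (- a.1, - a.2 + S a.1 (- a.1)).
Definition wzero : W := (0, 0).
Definition wmul (a b : W) : W :=
  (a.1 * b.1, a.2 * b.1 ^+ p + a.1 ^+ p * b.2 + p%:R * a.2 * b.2).
Definition wone : W := (1, 0).

Lemma waddA : associative wadd.
Proof.
move=> [a1 a2] [b1 b2] [c1 c2]; rewrite /wadd /=; congr pair; first by rewrite addrA.
have := wS_assoc hd a1 b1 c1 => e.
have -> : S (a1 + b1) c1 = S b1 c1 + S a1 (b1 + c1) - S a1 b1 by rewrite -e; ring.
ring.
Qed.
Lemma waddC : commutative wadd.
Proof.
move=> [a1 a2] [b1 b2]; rewrite /wadd /= (wS_sym hd a1 b1) addrC; congr pair.
by rewrite [a2 + b2]addrC.
Qed.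
Lemma wadd0 : left_id wzero wadd.
Proof. by move=> [a1 a2]; rewrite /wadd /= (wS0l hd) !add0r subr0. Qed.
Lemma waddN : left_inverse wzero wopp wadd.
Proof.
move=> [a1 a2]; rewrite /wadd /wopp /= addNr (wS_sym hd (- a1) a1); congr pair.
ring.
Qed.
HB.instance Definition _ := GRing.isZmodule.Build W waddA waddC wadd0 waddN.

Lemma wmulA : associative wmul.
Proof.
move=> [a1 a2] [b1 b2] [c1 c2]; rewrite /wmul /=; congr pair; first by rewrite mulrA.
rewrite !exprMn; ring.
Qed.
Lemma wmulC : commutative wmul.
Proof. by move=> [a1 a2] [b1 b2]; rewrite /wmul /=; congr pair; ring. Qed.
Lemma wmul1 : left_id wone wmul.
Proof. by move=> [a1 a2]; rewrite /wmul /= expr1n; congr pair; ring. Qed.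
Lemma wmulD : left_distributive wmul wadd.
Proof.
move=> [a1 a2] [b1 b2] [c1 c2]; rewrite /wmul /wadd /=; congr pair; first by ring.
rewrite (wS_pow hp) [a1 * c1]mulrC [b1 * c1]mulrC wS_mul; ring.
Qed.
HB.instance Definition _ := GRing.Zmodule_isComPzRing.Build W wmulA wmulC wmul1 wmulD.

Lemma W2_sub_same (a b c : B) : @GRing.add W (a, b) (@GRing.opp W (a, c)) = (0, b - c).
Proof.
change (wadd (a, b) (wopp (a, c)) = (0, b - c)); rewrite /wadd /wopp /=.
by congr pair; [rewrite subrr | ring].
Qed.
Lemma W2_subE (x y : W) : x - y = wadd x (wopp y). Proof. by []. Qed.
Lemma W2_mulE (a b : W) : a * b = wmul a b. Proof. by []. Qed.
Lemma W2_addE (a b : W) : a + b = wadd a b. Proof. by []. Qed.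

Section Psi.
Variables (A : comPzRingType) (h : {rmorphism A -> B}) (e : A -> B).
Hypotheses (e0 : e 0 = 0) (eD : forall y z, e (y + z) = e y + e z - S (h y) (h z))
  (e1 : e 1 = 0)
  (eM : forall y z, e (y * z) = e y * h z ^+ p + h y ^+ p * e z + p%:R * e y * e z).
Definition psi_fun (y : A) : W := (h y, e y).
Lemma psi0 : psi_fun 0 = 0. Proof. by rewrite /psi_fun rmorph0 e0. Qed.
Lemma psiD y z : psi_fun (y + z) = psi_fun y + psi_fun z.
Proof. by rewrite /psi_fun rmorphD eD. Qed.
Lemma psi1 : psi_fun 1 = 1. Proof. by rewrite /psi_fun rmorph1 e1. Qed.
Lemma psiM y z : psi_fun (y * z) = psi_fun y * psi_fun z.
Proof. by rewrite /psi_fun rmorphM eM. Qed.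
Definition psi : {rmorphism A -> W} := mkRM psi0 psiD psi1 psiM.
Lemma psiE y : psi y = (h y, e y). Proof. by []. Qed.
End Psi.
End W2Ring.

Lemma idpow_Xp (B : comPzRingType) (Q : B -> Prop) (hp : (0 < 1)%N) k (m : B) (q : nat) :
  idpow Q k m -> idpow Q k (m ^+ q.+1).
Proof. by move=> h; rewrite exprSr; apply: idMl => //; exact: idpow_ideal. Qed.

Lemma delta_pow (B : comPzRingType) (p : nat) (dB : B -> B) (hd : is_delta p dB)
  (hp : prime p) (Q : B -> Prop) (hQ : ideal_of Q) (hpQ : Q p%:R) k x :
  idpow Q k.+1 x -> idpow Q k (dB x).
Proof.
have [q pq] : exists q, p = q.+1 by case: (p) (prime_gt0 hp) => [//|q] _; exists q.
have hI := @idpow_ideal B Q.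
have powp : forall j m, idpow Q j m -> idpow Q j (m ^+ p).
  by move=> j m h; rewrite pq exprSr; apply: idMl.
have gen : forall k (t : 'I_k.+1 -> B), (forall i, Q (t i)) ->
    idpow Q k (dB (\prod_(i < k.+1) t i)).
  elim=> [|j IH] t ht; first exact: idpow0.
  rewrite big_ord_recr /= (dM hd).
  set m := \prod_(i < j.+1) _; set u := t ord_max.
  have hm : idpow Q j.+1 m.
    by apply: gen_sub; exists (fun i => t (widen_ord (leqnSn j.+1) i)).
  have hdm : idpow Q j (dB m) by apply: IH.
  have hu : Q u by apply: ht.
  apply: idD => //; first apply: idD => //.
  - apply: idpowMS => //; rewrite pq exprSr; exact: idMl.
  - by apply: idMr => //; apply: powp.
  - rewrite [p%:R * _]mulrC; apply: idMr => //; exact: idpowMS.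
move=> [n [r [s [hs ->]]]].
elim: n r s hs => [|n IH] r s hs; first by rewrite big_ord0 (d0 hd); exact: id0.
rewrite big_ord_recr /= (dD hd).
set S1 := \sum_(i < n) _.
have hs' : forall i, pgen Q k.+1 (s (widen_ord (leqnSn n) i)) by move=> i; apply: hs.
have hS1 : idpow Q k.+1 S1.
  apply: (big_ind (idpow Q k.+1)); [exact: id0 | exact: idD | ].
  by move=> i _; apply: idMl => //; apply: gen_sub; apply: hs'.
have hg : idpow Q k.+1 (s ord_max) by apply: gen_sub; apply: hs.
have hdg : idpow Q k (dB (s ord_max)).
  by case: (hs ord_max) => t [ht ->]; apply: gen.
apply: idB => //; first apply: idD => //.
- exact: (IH (fun i => r (widen_ord (leqnSn n) i)) _ hs').
- rewrite (dM hd); apply: idD => //; first apply: idD => //.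
  + by apply: idMl => //; apply: powp; apply: idpow_le hg.
  + exact: idMl.
  + exact: idMl.
- apply: wS_in => //; apply: idMr => //; exact: idpow_le hS1.
Qed.

Lemma inv_fg (B : comPzRingType) (K : B -> Prop) : ideal_of K -> invertible_ideal K ->
  exists (m : nat) (d : 'I_m -> B), (forall j, K (d j)) /\
    forall x, K x -> exists be : 'I_m -> B, x = \sum_(j < m) d j * be j.
Proof.
move=> hK [n [s [d [c [hsum hi]]]]]; exists n, d; split.
  by move=> j; case: (hi j).
move=> x hx.
pose T := fun z : B => exists be : 'I_n -> B, z * x = \sum_(j < n) d j * be j.
have hT : ideal_of T.
  split.
  - by exists (fun _ => 0); rewrite mul0r big1 // => j _; rewrite mulr0.
  - move=> a b [ba ea] [bb eb]; exists (fun j => ba j + bb j).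
    by rewrite mulrDl ea eb -big_split; apply: eq_bigr => j _; rewrite mulrDr.
  - move=> a b [bb eb]; exists (fun j => a * bb j).
    by rewrite -mulrA eb mulr_sumr; apply: eq_bigr => j _; rewrite mulrCA.
pose Rd := fun z : B => exists k, T (z ^+ k).
have hR : ideal_of Rd.
  split.
  - by exists 1%N; rewrite expr1; apply: id0.
  - move=> a b [m ha] [l hb]; exists (m + l)%N; rewrite exprDn.
    apply: (big_ind T); [exact: id0 | exact: idD | move=> i _].
    rewrite -mulr_natr; apply: idMr => //.
    case: (leqP l i) => hli.
    + have -> : b ^+ i = b ^+ (i - l) * b ^+ l by rewrite -exprD subnK.
      by rewrite mulrCA; apply: (idMl hT); apply: (idMl hT).
    + have hm : (m <= m + l - i)%N by rewrite -addnBA ?leq_addr // ltnW.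
      have -> : a ^+ (m + l - i) = a ^+ m * a ^+ (m + l - i - m) by rewrite -exprD subnKC.
      by apply: (idMr hT); apply: (idMr hT).
  - by move=> a z [k hz]; exists k; rewrite exprMn; apply: idMl.
have h1 : Rd 1.
  rewrite -hsum; apply: (big_ind Rd); [exact: id0 | exact: idD | move=> i _].
  apply: idMl => //; case: (hi i) => _ hloc _; case: (hloc x hx) => k [y e].
  exists k; exists (fun j => if j == i then y else 0).
  rewrite e (bigD1 i) //= eqxx big1 ?addr0 // => j /negbTE ->; exact: mulr0.
case: h1 => k [be e]; exists be; by rewrite -e expr1n mul1r.
Qed.

Lemma pow_split (B : comPzRingType) (p : nat) (K : B -> Prop) (hK : ideal_of K) n y :
  idpow (ideal_add (pideal p B) K) n y -> exists b, K (y - p%:R ^+ n * b).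
Proof.
pose T := fun y : B => exists b, K (y - p%:R ^+ n * b).
have hT : ideal_of T.
  split.
  - by exists 0; rewrite mulr0 subr0; apply: id0.
  - move=> a b [ba ea] [bb eb]; exists (ba + bb).
    have -> : a + b - p%:R ^+ n * (ba + bb) = (a - p%:R ^+ n * ba) + (b - p%:R ^+ n * bb) by ring.
    exact: idD.
  - move=> a z [bz ez]; exists (a * bz).
    have -> : a * z - p%:R ^+ n * (a * bz) = a * (z - p%:R ^+ n * bz) by ring.
    exact: idMl.
apply: (gen_min hT) => {}y [t [ht ->]].
rewrite /T; clear hT T.
elim: n t ht => [|n IH] t ht.
  by exists 1; rewrite big_ord0 expr0 mulr1 subrr; apply: id0.
rewrite big_ord_recr /=.
case: (IH (fun i => t (widen_ord (leqnSn n) i))) => [i|b eb]; first exact: ht.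
case: (ht ord_max) => u [k [[c ->] [hk ->]]].
exists (b * c).
set m := \prod_(i < n) _.
have -> : m * (p%:R * c + k) - p%:R ^+ n.+1 * (b * c) =
   (m - p%:R ^+ n * b) * (p%:R * c + k) + p%:R ^+ n * b * k by rewrite exprSr; ring.
by apply: (idD hK); [apply: (idMr hK) | apply: (idMl hK)].
Qed.

Lemma closedK (B : comPzRingType) (p : nat) (K : B -> Prop) (hK : ideal_of K)
  (hinv : invertible_ideal K) (hc : adic_complete (ideal_add (pideal p B) K))
  (Nb : nat) (hbd : forall (x : B) k, K (p%:R ^+ k * x) -> K (p%:R ^+ Nb * x)) x :
  (forall n, ideal_add K (idpow (ideal_add (pideal p B) K) n) x) -> K x.
Proof.
move=> hx.
set P := ideal_add (pideal p B) K.
have hP : ideal_of P by apply: add_ideal => //; exact: pideal_ideal.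
have hPn := @idpow_ideal B P.
have pP : forall n, idpow P n (p%:R ^+ n).
  by move=> n; apply: idpowX; apply: add_l => //; exists 1; rewrite mulr1.
have [bs hbs] : exists bs : nat -> B, forall n, K (x - p%:R ^+ n * bs n).
  suff H : forall n, exists b, K (x - p%:R ^+ n * b) by exact: (choiceF H).
  move=> n; case: (hx n) => a [y [ha [hy ->]]].
  case: (pow_split hK hy) => b hb; exists b.
  by rewrite -addrA; apply: (idD hK).
pose c n := p%:R ^+ n * bs n.
pose e n := p%:R ^+ Nb * (bs (Nb + n)%N - p%:R * bs (Nb + n)%N.+1).
have he : forall n, K (e n).
  move=> n; apply: (hbd _ (Nb + n)%N).
  have := idB hK (hbs (Nb + n)%N.+1) (hbs (Nb + n)%N).
  by congr K; rewrite exprSr; ring.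
have hce : forall n, c (Nb + n)%N - c (Nb + n)%N.+1 = p%:R ^+ n * e n.
  by move=> n; rewrite /c /e exprSr exprD; ring.
have [m [d [hd hfg]]] := inv_fg hK hinv.
have [be hbe] : exists be : nat -> 'I_m -> B, forall n, e n = \sum_(j < m) d j * be n j.
  suff H : forall n, exists b : 'I_m -> B, e n = \sum_(j < m) d j * b j by exact: (choiceF H).
  by move=> n; apply: hfg.
pose s j M := \sum_(0 <= n < M) p%:R ^+ n * be n j.
have [sg hsg] : exists sg : 'I_m -> B, forall j M, idpow P M (sg j - s j M).
  suff H : forall j, exists g, forall M, idpow P M (g - s j M) by exact: (choiceF H).
  move=> j; apply: hc.2 => M.
  rewrite /s big_nat_recr //= addrAC subrr add0r; apply: idMr => //.
pose y := \sum_(j < m) d j * sg j.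
have hy : K y.
  by apply: (big_ind K); [exact: id0 | exact: idD | move=> j _; apply: idMr].
pose G M := \sum_(j < m) d j * s j M.
have hG : forall M, c Nb - c (Nb + M)%N = G M.
  elim=> [|M IH]; first by rewrite addn0 subrr /G big1 // => j _; rewrite /s big_geq // mulr0.
  have -> : c Nb - c (Nb + M.+1)%N = (c Nb - c (Nb + M)%N) + (c (Nb + M)%N - c (Nb + M)%N.+1).
    by rewrite addnS; ring.
  rewrite IH hce hbe /G mulr_sumr -big_split; apply: eq_bigr => j _ /=.
  by rewrite /s big_nat_recr //=; ring.
have hcy : c Nb = y.
  apply/eqP; rewrite -subr_eq0; apply/eqP; apply: hc.1 => M.
  have -> : c Nb - y = (c Nb - c (Nb + M)%N - G M) + c (Nb + M)%N
       - \sum_(j < m) d j * (sg j - s j M).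
    have -> : \sum_(j < m) d j * (sg j - s j M) = y - G M.
      by rewrite /y /G -sumrB; apply: eq_bigr => j _; rewrite mulrBr.
    ring.
  rewrite hG subrr add0r; apply: idB => //.
  - by rewrite /c exprD [_ ^+ Nb * _]mulrC; apply: (idMr (hPn M)); apply: (idMr (hPn M)).
  - by apply: (big_ind (idpow P M)); [exact: id0 | exact: idD | move=> j _; apply: idMl].
have -> : x = (x - c Nb) + c Nb by rewrite subrK.
apply: (idD hK); [exact: hbs Nb | rewrite hcy; exact: hy].
Qed.

Lemma preim_ideal (X Y : comPzRingType) (phi : {rmorphism X -> Y}) (T : Y -> Prop) :
  ideal_of T -> ideal_of (fun x => T (phi x)).
Proof.
move=> hT; split.
- by rewrite rmorph0; apply: id0.
- by move=> x y hx hy; rewrite rmorphD; apply: idD.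
- by move=> a x hx; rewrite rmorphM; apply: idMl.
Qed.

Lemma rmod_mono (X E : comPzRingType) (T T' : E -> Prop) (w : X -> E) :
  (forall x, T x -> T' x) -> rmod T w -> rmod T' w.
Proof. by move=> h [h1 h2 h3]; split=> *; apply: h. Qed.

Lemma rmod_w0 (X E : comPzRingType) (T : E -> Prop) (w : X -> E) :
  ideal_of T -> rmod T w -> T (w 0).
Proof.
move=> hT [hD _ _]; have := hD 0 0; rewrite addr0 opprD addrA subrr add0r.
by move/(idN hT); rewrite opprK.
Qed.

Definition idRM (X : comPzRingType) : {rmorphism X -> X} :=
  @mkRM X X id erefl (fun _ _ => erefl) erefl (fun _ _ => erefl).

Section StructIdeals.
Variables (p : nat) (R : comPzRingType) (I : R -> Prop).
Local Notation PR := (ideal_add (pideal p R) I).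

Lemma sP_img (C : comPzRingType) (sC : {rmorphism R -> C}) r :
  PR r -> ideal_add (pideal p C) (ext_ideal sC I) (sC r).
Proof.
move=> [a [b [[c ->] [hb ->]]]]; rewrite rmorphD rmorphM rmorph_nat.
exists (p%:R * sC c), (sC b); split; first by exists (sC c).
by split => //; apply: ext_sub.
Qed.

Lemma Kimg (X C : comPzRingType) (sX : {rmorphism R -> X}) (sC : {rmorphism R -> C})
  (phi : {rmorphism X -> C}) (hphi : forall r, phi (sX r) = sC r) n x :
  ext_ideal sX (idpow PR n) x ->
  idpow (ideal_add (pideal p C) (ext_ideal sC I)) n (phi x).
Proof.
apply: (ext_min (T := fun x => idpow _ n (phi x))).
  by apply: preim_ideal; apply: idpow_ideal.
move=> r hr; rewrite hphi; apply: idpow_img hr; exact: sP_img.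
Qed.

Lemma rmod_kills (X C : comPzRingType) (sX : {rmorphism R -> X}) (sC : {rmorphism R -> C})
  (T : C -> Prop) (hT : ideal_of T) (w : X -> C) (hw : rmod T w)
  (hs : forall r, T (w (sX r) - sC r)) n x :
  ext_ideal sX (idpow PR n) x ->
  ideal_add T (idpow (ideal_add (pideal p C) (ext_ideal sC I)) n) (w x).
Proof.
set Pn := idpow (ideal_add (pideal p C) (ext_ideal sC I)) n.
have hPn : ideal_of Pn by apply: idpow_ideal.
have hTP := add_ideal hT hPn.
case: hw => hD hM h1.
apply: (ext_min (T := fun x => ideal_add T Pn (w x))).
- split.
  + by apply: add_l => //; apply: (rmod_w0 hT); split.
  + move=> y z hy hz.
    have -> : w (y + z) = (w (y + z) - (w y + w z)) + (w y + w z) by rewrite subrK.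
    by apply: idD => //; [apply: add_l | apply: idD].
  + move=> a y [t [q [ht [hq e]]]].
    have -> : w (a * y) = (w (a * y) - w a * w y + w a * t) + w a * q.
      by rewrite -addrA -mulrDr -e subrK.
    apply: idD => //; first by apply: add_l => //; apply: idD => //; apply: idMl.
    by apply: add_r => //; apply: idMl.
- move=> r hr.
  have -> : w (sX r) = (w (sX r) - sC r) + sC r by rewrite subrK.
  apply: idD => //; first by apply: add_l.
  by apply: add_r => //; apply: idpow_img hr; exact: sP_img.
Qed.

Lemma Kmono (X : comPzRingType) (sX : {rmorphism R -> X}) n x :
  ext_ideal sX (idpow PR n.+1) x -> ext_ideal sX (idpow PR n) x.
Proof.
apply: gen_mono => y [r [hr ->]]; exists r; split => //; exact: idpowS.
Qed.
End StructIdeals.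

Lemma dmor_comp (R X Y Z : comPzRingType) (dX : X -> X) (sX : {rmorphism R -> X})
  (JX : X -> Prop) (dY : Y -> Y) (sY : {rmorphism R -> Y}) (JY : Y -> Prop)
  (dZ : Z -> Z) (sZ : {rmorphism R -> Z}) (JZ : Z -> Prop)
  (g : {rmorphism X -> Y}) (k : {rmorphism Y -> Z}) :
  dmor_over dX sX JX dY sY JY g -> dmor_over dY sY JY dZ sZ JZ k ->
  dmor_over dX sX JX dZ sZ JZ (k \o g)%FUN.
Proof.
move=> [g1 g2 g3] [k1 k2 k3]; split.
- by move=> x /=; rewrite g1 k1.
- by move=> x hx /=; apply: k2; apply: g2.
- by move=> r /=; rewrite g3 k3.
Qed.

Lemma dmor_id (R X : comPzRingType) (dX : X -> X) (sX : {rmorphism R -> X}) (JX : X -> Prop) :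
  dmor_over dX sX JX dX sX JX (idRM X).
Proof. by split. Qed.

Unset Implicit Arguments.
Section Main.
Variables (p : nat) (hp : prime p) (R : comPzRingType) (dR : R -> R) (I : R -> Prop)
  (A : comPzRingType) (dA : A -> A) (sA : {rmorphism R -> A}) (J : A -> Prop)
  (A' : comPzRingType) (dA' : A' -> A') (sA' : {rmorphism R -> A'}) (J' : A' -> Prop)
  (hA : dpair_over p dR I dA sA J) (hA' : dpair_over p dR I dA' sA' J')
  (f : {rmorphism A -> A'}) (hf : dmor_over dA sA J dA' sA' J' f).
Hypothesis hetale : forall n : nat, (0 < n)%N ->
  etale_mod f (ext_ideal sA (idpow (ideal_add (pideal p R) I) n))
              (ext_ideal sA' (idpow (ideal_add (pideal p R) I) n)).
Hypotheses (hinj : forall x, J' (f x) -> J x) (hsurj : forall y, exists x, J' (y - f x)).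

Local Notation PR := (ideal_add (pideal p R) I).
Local Notation Kn n := (ext_ideal sA (idpow PR n)).
Local Notation K'n n := (ext_ideal sA' (idpow PR n)).

Lemma hJ : ideal_of J. Proof. by case: hA. Qed.
Lemma hJ' : ideal_of J'. Proof. by case: hA'. Qed.
Lemma hdA' : is_delta p dA'. Proof. by case: hA'. Qed.
Lemma f_s r : f (sA r) = sA' r. Proof. by case: hf => _ _ hs. Qed.
Lemma f_d x : f (dA x) = dA' (f x). Proof. by case: hf => ->. Qed.

Lemma fe n : formally_etale_mod f (Kn n.+1) (K'n n.+1).
Proof. by case: (hetale n.+1 (ltn0Sn n)). Qed.

Lemma fK n x : Kn n x -> K'n n (f x).
Proof.
apply: (ext_min (T := fun x => K'n n (f x))).
  by apply: preim_ideal; apply: ext_ideal_ideal.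
by move=> r hr; rewrite f_s; apply: ext_sub.
Qed.

Lemma fJ x x' : J' (f x - f x') -> J (x - x').
Proof. by move=> h; apply: hinj; rewrite rmorphB. Qed.

Section Lift.
Variables (B : comPzRingType) (dB : B -> B) (sB : {rmorphism R -> B})
  (hB : bprism_over p dR I dB sB).
Local Notation IB := (ext_ideal sB I).
Local Notation P := (ideal_add (pideal p B) IB).
Local Notation Pn n := (idpow P n).

Lemma hIB : ideal_of IB. Proof. exact: ext_ideal_ideal. Qed.
Lemma hP : ideal_of P. Proof. apply: add_ideal; [exact: pideal_ideal | exact: hIB]. Qed.
Lemma hPn n : ideal_of (Pn n). Proof. exact: idpow_ideal. Qed.
Lemma IB_P x : IB x -> P x. Proof. by move=> h; apply: add_r => //; exact: pideal_ideal. Qed.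
Lemma IB_P1 x : IB x -> Pn 1 x. Proof. by move=> h; apply/idpow1; [exact: hP | exact: IB_P]. Qed.
Lemma hdB : is_delta p dB. Proof. by case: hB. Qed.
Lemma hBP : is_bounded_prism p dB IB. Proof. by case: hB. Qed.
Lemma hcomp : adic_complete P. Proof. by case: hBP. Qed.
Lemma sep z : (forall k, Pn k.+1 z) -> z = 0.
Proof. by move=> h; apply: hcomp.1 => [[|k]]; [exact: idpow0 | exact: h]. Qed.
Lemma PnS k x : Pn k.+1 x -> Pn k x. Proof. exact: idpowS. Qed.
Lemma Pn_le m n x : (m <= n)%N -> Pn n x -> Pn m x. Proof. exact: idpow_le. Qed.
Lemma pP : P p%:R. Proof. by apply: add_l; [exact: hIB | exists 1; rewrite mulr1]. Qed.

Lemma uniq_lift (h1 h2 : {rmorphism A' -> B})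
  (j1 : forall y, J' y -> IB (h1 y)) (j2 : forall y, J' y -> IB (h2 y))
  (s1 : forall r, h1 (sA' r) = sB r) (s2 : forall r, h2 (sA' r) = sB r)
  (hff : forall x, h1 (f x) = h2 (f x)) : forall y, h1 y = h2 y.
Proof.
have base : forall y, Pn 1 (h1 y - h2 y).
  move=> y; case: (hsurj y) => x hx.
  have -> : h1 y - h2 y = h1 (y - f x) - h2 (y - f x) by rewrite !rmorphB hff; ring.
  by apply: IB_P1; apply: idB; [exact: hIB | apply: j1 | apply: j2].
have step : forall k y, Pn k.+1 (h1 y - h2 y).
  elim=> [|k IH]; first exact: base.
  apply: (fe_uniq (fe k.+1) (fK k.+2) (hPn k.+2) (hPn k.+1)).
  - exact: PnS.
  - by move=> a b ha hb; apply: Pn_le (idpowM ha hb); lia.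
  - exact: rmorph_rmod (hPn _) _.
  - exact: rmorph_rmod (hPn _) _.
  - by move=> y hy; apply: (Kimg s1).
  - by move=> y hy; apply: (Kimg s2).
  - by move=> x; rewrite hff subrr; exact: id0 (hPn _).
  - exact: IH.
move=> y; apply/eqP; rewrite -subr_eq0; apply/eqP; apply: sep => k; apply: step.
Qed.

Variables (h0 : {rmorphism A -> B}) (hh0 : dmor_over dA sA J dB sB IB h0).
Lemma h0d x : h0 (dA x) = dB (h0 x). Proof. by case: hh0 => ->. Qed.
Lemma h0J x : J x -> IB (h0 x). Proof. by case: hh0 => _ h _; apply: h. Qed.
Lemma h0s r : h0 (sA r) = sB r. Proof. by case: hh0 => _ _ hs. Qed.

Definition xs (y : A') : A := epsilon (inhabits 0) (fun x => J' (y - f x)).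
Lemma xsP y : J' (y - f (xs y)).
Proof. exact: (epsilon_spec (inhabits 0) (fun x => J' (y - f x)) (hsurj y)). Qed.
Definition hv1 (y : A') : B := h0 (xs y).

Lemma hv1_rmod : rmod IB hv1.
Proof.
have hJ'' := hJ'.
split.
- move=> y z; rewrite /hv1 -!rmorphD -rmorphB; apply: h0J; apply: fJ.
  have -> : f (xs (y + z)) - f (xs y + xs z) =
     - ((y + z) - f (xs (y + z))) + (y - f (xs y)) + (z - f (xs z)) by rewrite rmorphD; ring.
  by apply: (idD hJ'); [apply: (idD hJ'); [apply: (idN hJ') | ] | ]; apply: xsP.
- move=> y z; rewrite /hv1 -!rmorphM -rmorphB; apply: h0J; apply: fJ.
  have -> : f (xs (y * z)) - f (xs y * xs z) =
     - ((y * z) - f (xs (y * z))) + (y - f (xs y)) * z + f (xs y) * (z - f (xs z))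
     by rewrite rmorphM; ring.
  apply: (idD hJ'); first apply: (idD hJ').
  + by apply: (idN hJ'); apply: xsP.
  + by apply: (idMr hJ'); apply: xsP.
  + by apply: (idMl hJ'); apply: xsP.
- rewrite /hv1 -(rmorph1 h0) -rmorphB; apply: h0J; apply: fJ.
  have -> : f (xs 1) - f 1 = - (1 - f (xs 1)) by rewrite rmorph1; ring.
  by apply: (idN hJ'); apply: xsP.
Qed.

Lemma hv1_s r : IB (hv1 (sA' r) - sB r).
Proof.
rewrite /hv1 -h0s -rmorphB; apply: h0J; apply: fJ; rewrite f_s.
have -> : f (xs (sA' r)) - sA' r = - (sA' r - f (xs (sA' r))) by ring.
by apply: idN; [exact: hJ' | apply: xsP].
Qed.

Lemma hv1_f x : IB (hv1 (f x) - h0 x).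
Proof.
rewrite /hv1 -rmorphB; apply: h0J; apply: fJ.
have -> : f (xs (f x)) - f x = - (f x - f (xs (f x))) by ring.
by apply: idN; [exact: hJ' | apply: xsP].
Qed.

Lemma hv1_J y : J' y -> IB (hv1 y).
Proof.
move=> hy; apply: h0J; apply: hinj.
have -> : f (xs y) = y - (y - f (xs y)) by ring.
by apply: idB; [exact: hJ' | | apply: xsP].
Qed.

Definition Inv k (w : A' -> B) : Prop :=
  [/\ rmod (Pn k.+1) w, (forall y, K'n k.+1 y -> Pn k.+1 (w y))
    & (forall x, Pn k.+1 (w (f x) - h0 x))].

Lemma Inv0 : Inv 0 hv1.
Proof.
split.
- exact: rmod_mono IB_P1 hv1_rmod.
- move=> y hy; have := rmod_kills hIB hv1_rmod hv1_s hy.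
  move=> [a [b [ha [hb ->]]]]; apply: idD; [exact: hPn | exact: IB_P1 | exact: hb].
- by move=> x; apply: IB_P1; apply: hv1_f.
Qed.

Lemma Inv_step k w : Inv k w -> exists w', Inv k.+1 w' /\ forall y, Pn k.+1 (w' y - w y).
Proof.
case=> rw kw cw.
have hNN : forall a b, Pn k.+1 a -> Pn k.+1 b -> Pn k.+2 (a * b).
  by move=> a b ha hb; apply: Pn_le (idpowM ha hb); lia.
have ku : forall x, Kn k.+2 x -> Pn k.+2 (h0 x) by move=> x hx; apply: (Kimg h0s).
have kv : forall y, K'n k.+2 y -> Pn k.+1 (w y) by move=> y hy; apply: kw; apply: Kmono.
have [w' [r' k' c' n']] := fe_exist (fe k.+1) (hPn k.+2) (hPn k.+1) (PnS k.+1) hNN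
  (rmorph_rmod (hPn k.+2) h0) ku rw kv cw.
by exists w'; split.
Qed.

Lemma nx_ex : exists nx : nat * (A' -> B) -> (A' -> B), forall k w, Inv k w ->
  Inv k.+1 (nx (k, w)) /\ forall y, Pn k.+1 (nx (k, w) y - w y).
Proof.
suff H : forall t : nat * (A' -> B), exists u, Inv t.1 t.2 ->
    Inv t.1.+1 u /\ forall y, Pn t.1.+1 (u y - t.2 y).
  by case: (choiceF H) => nx hnx; exists nx => k w; apply: (hnx (k, w)).
move=> [k w] /=; case: (classic (Inv k w)) => hI.
- by case: (Inv_step k w hI) => w' hw'; exists w'.
- by exists w.
Qed.

Lemma hdA'' : is_delta p dA'. Proof. exact: hdA'. Qed.
Local Notation Q' := (ideal_add (pideal p A') (ext_ideal sA' I)).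
Lemma hQ' : ideal_of Q'.
Proof. apply: add_ideal; [exact: pideal_ideal | exact: ext_ideal_ideal]. Qed.
Lemma pQ' : Q' p%:R.
Proof. by apply: add_l; [exact: ext_ideal_ideal | exists 1; rewrite mulr1]. Qed.

Lemma Q'_img (Hr : {rmorphism A' -> B}) (Hs : forall r, Hr (sA' r) = sB r) y :
  Q' y -> P (Hr y).
Proof.
move=> [a [b [[c ->] [hb ->]]]]; rewrite rmorphD rmorphM rmorph_nat.
exists (p%:R * Hr c), (Hr b); split; first by exists (Hr c).
split => //; move: hb; apply: (ext_min (T := fun y => IB (Hr y))).
  by apply: preim_ideal; exact: hIB.
by move=> r hr; rewrite Hs; apply: ext_sub.
Qed.

Lemma exist_lift : exists h : {rmorphism A' -> B},
  dmor_over dA' sA' J' dB sB IB h /\ forall x, h (f x) = h0 x.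
Proof.
have [nx hnx] := nx_ex.
pose hs := fix hs (n : nat) : A' -> B := if n is k.+1 then nx (k, hs k) else hv1.
have hsI : forall k, Inv k (hs k) /\ forall y, Pn k.+1 (hs k.+1 y - hs k y).
  elim=> [|k [IH _]].
  - by split; [exact: Inv0 | exact: (hnx 0%N hv1 Inv0).2].
  - have [I1 _] := hnx k (hs k) IH.
    by split; [exact: I1 | exact: (hnx k.+1 _ I1).2].
have [H hH] : exists H : A' -> B, forall y n, Pn n (H y - hs n y).
  suff S : forall y, exists z, forall n, Pn n (z - hs n y) by exact: (choiceF S).
  move=> y; apply: hcomp.2 => n; apply: PnS; exact: (hsI n).2 y.
have hH1 : forall y k, Pn k.+1 (H y - hs k y).
  move=> y k; have -> : H y - hs k y = (H y - hs k.+1 y) + (hs k.+1 y - hs k y) by ring.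
  by apply: (idD (hPn k.+1)); [apply: hH | apply: (hsI k).2].
have HD : forall y z, H (y + z) = H y + H z.
  move=> y z; apply/eqP; rewrite -subr_eq0; apply/eqP; apply: sep => k.
  case: (hsI k) => [[[rD _ _] _ _] _].
  have -> : H (y + z) - (H y + H z) = (H (y + z) - hs k (y + z)) - (H y - hs k y)
     - (H z - hs k z) + (hs k (y + z) - (hs k y + hs k z)) by ring.
  have hI := hPn k.+1.
  by apply: (idD hI); [apply: (idB hI); [apply: (idB hI)|] | exact: rD]; apply: hH1.
have HM : forall y z, H (y * z) = H y * H z.
  move=> y z; apply/eqP; rewrite -subr_eq0; apply/eqP; apply: sep => k.
  case: (hsI k) => [[[_ rM _] _ _] _].
  have -> : H (y * z) - H y * H z = (H (y * z) - hs k (y * z)) - (H y - hs k y) * H z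
     - hs k y * (H z - hs k z) + (hs k (y * z) - hs k y * hs k z) by ring.
  have hI := hPn k.+1.
  apply: (idD hI); [apply: (idB hI); [apply: (idB hI)|] | exact: rM].
  + exact: hH1.
  + by apply: (idMr hI); apply: hH1.
  + by apply: (idMl hI); apply: hH1.
have H1 : H 1 = 1.
  apply/eqP; rewrite -subr_eq0; apply/eqP; apply: sep => k.
  case: (hsI k) => [[[_ _ r1] _ _] _].
  have -> : H 1 - 1 = (H 1 - hs k 1) + (hs k 1 - 1) by ring.
  by apply: (idD (hPn k.+1)); [apply: hH1 | exact: r1].
have H0 : H 0 = 0.
  by have := HD 0 0; rewrite addr0 => e; apply: (addrI (H 0)); rewrite -e addr0.
pose Hr : {rmorphism A' -> B} := mkRM H0 HD H1 HM.
have HrE : forall y, Hr y = H y by [].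
have HF : forall x, Hr (f x) = h0 x.
  move=> x; apply/eqP; rewrite -subr_eq0; apply/eqP; apply: sep => k.
  case: (hsI k) => [[_ _ c1] _].
  have -> : Hr (f x) - h0 x = (H (f x) - hs k (f x)) + (hs k (f x) - h0 x) by rewrite HrE; ring.
  by apply: (idD (hPn k.+1)); [apply: hH1 | exact: c1].
have Hs : forall r, Hr (sA' r) = sB r by move=> r; rewrite -f_s HF h0s.
have hIBn := fun n => add_ideal hIB (hPn n).
have ch : forall n y, ideal_add IB (Pn n.+1) (H y - hv1 y).
  elim=> [|n IH] y; first by apply: add_r; [exact: hIB | exact: hH1 y 0%N].
  apply: (fe_uniq (fe n.+1) (fK n.+2) (hIBn n.+2) (hIBn n.+1)) => //.
  - by move=> x [a [b [ha [hb ->]]]]; exists a, b; split => //; split => //; apply: PnS.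
  - move=> u v [a [b [ha [hb ->]]]] [c [d [hc [hd ->]]]].
    exists (a * (c + d) + b * c), (b * d); split; [|split; last by ring].
      by apply: (idD hIB); [apply: (idMr hIB) | apply: (idMl hIB)].
    by apply: Pn_le (idpowM hb hd); lia.
  - exact: (rmorph_rmod (hIBn n.+2) Hr).
  - by apply: rmod_mono hv1_rmod => x hx; apply: add_l => //; exact: hPn.
  - by move=> z hz; apply: add_r; [exact: hIB | apply: (Kimg Hs)].
  - by move=> z hz; apply: (rmod_kills hIB hv1_rmod hv1_s).
  - move=> x; rewrite -HrE HF; apply: add_l; first exact: hPn.
    by rewrite -opprB; apply: (idN hIB); apply: hv1_f.
have HJ : forall y, J' y -> IB (Hr y).
  move=> y hy.
  have [_ _ hinv _ [_ [Nb hbd]]] := hBP.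
  apply: (closedK hIB hinv hcomp hbd) => [[|n]].
    by apply: add_r; [exact: hIB | exact: idpow0].
  have -> : Hr y = (H y - hv1 y) + hv1 y by rewrite subrK.
  case: (ch n y) => a [b [ha [hb ->]]].
  exists (a + hv1 y), b; split; [|split => //; ring].
  by apply: (idD hIB) => //; apply: hv1_J.
(* compatibility with delta, via Witt vectors of length 2 *)
have hd := hdB.
have hdA := hdA''.
have e0 : Hr (dA' 0) = 0 by rewrite (d0 hdA) rmorph0.
have eD : forall y z, Hr (dA' (y + z)) = Hr (dA' y) + Hr (dA' z) - wS p (Hr y) (Hr z).
  by move=> y z; rewrite (dD hdA) rmorphB rmorphD wS_rmorph.
have e1 : Hr (dA' 1) = 0 by rewrite (d1 hdA) rmorph0.
have eM : forall y z, Hr (dA' (y * z)) = Hr (dA' y) * Hr z ^+ p + Hr y ^+ p * Hr (dA' z)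
    + p%:R * Hr (dA' y) * Hr (dA' z).
  by move=> y z; rewrite (dM hdA) !rmorphD !rmorphM !rmorphXn rmorph_nat.
have e0' : dB (Hr 0) = 0 by rewrite rmorph0 (d0 hd).
have eD' : forall y z, dB (Hr (y + z)) = dB (Hr y) + dB (Hr z) - wS p (Hr y) (Hr z).
  by move=> y z; rewrite rmorphD (dD hd).
have e1' : dB (Hr 1) = 0 by rewrite rmorph1 (d1 hd).
have eM' : forall y z, dB (Hr (y * z)) = dB (Hr y) * Hr z ^+ p + Hr y ^+ p * dB (Hr z)
    + p%:R * dB (Hr y) * dB (Hr z).
  by move=> y z; rewrite rmorphM (dM hd).
pose psi1 := psi hd hp e0 eD e1 eM.
pose psi2 := psi hd hp e0' eD' e1' eM'.
have psi1E : forall y, psi1 y = (Hr y, Hr (dA' y)) by [].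
have psi2E : forall y, psi2 y = (Hr y, dB (Hr y)) by [].
have eXp : forall x : B, x ^+ p = x ^+ p.-1 * x.
  by move=> x; rewrite -exprSr prednK // prime_gt0.
pose WM k (w : W2 hd hp) := Pn k.+1 w.1 /\ Pn k w.2.
have WMi : forall k, ideal_of (WM k).
  move=> k; have hI1 := hPn k.+1; have hI0 := hPn k; split.
  - by split; apply: id0.
  - move=> [a1 a2] [b1 b2] [ha1 ha2] [hb1 hb2]; rewrite W2_addE /wadd /=; split.
      exact: idD.
    apply: (idB hI0); first exact: idD.
    apply: wS_in => //; apply: Pn_le (idpowM ha1 hb1); lia.
  - move=> [x1 x2] [a1 a2] [ha1 ha2]; rewrite W2_mulE /wmul /=; split.
      exact: idMl.
    have hpa : Pn k (a1 ^+ p).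
      by rewrite eXp; apply: (idMl hI0); apply: PnS.
    apply: (idD hI0); first apply: (idD hI0).
    + exact: idMl.
    + exact: idMl.
    + exact: idMl.
have hNN : forall k u v, WM k u -> WM k v -> WM k.+1 (u * v).
  move=> k [a1 a2] [b1 b2] [ha1 ha2] [hb1 hb2]; rewrite W2_mulE /wmul /=; split.
    by apply: Pn_le (idpowM ha1 hb1); lia.
  have hI := hPn k.+1.
  apply: (idD hI); first apply: (idD hI).
  + rewrite eXp mulrCA; apply: (idMl hI); apply: Pn_le (idpowM ha2 hb1); lia.
  + rewrite eXp -mulrA; apply: (idMl hI); apply: Pn_le (idpowM ha1 hb2); lia.
  + rewrite -mulrA mulrC; apply: Pn_le (idpowMS hP (idpowM ha2 hb2) pP).
    lia.
have chW : forall k y, WM k (psi1 y - psi2 y).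
  elim=> [|k IH] y.
    rewrite W2_subE psi1E psi2E /wadd /wopp /=; split; last exact: idpow0.
    by rewrite subrr; apply: id0; apply: hPn.
  apply: (fe_uniq (fe k.+1) (fK k.+2) (WMi k.+1) (WMi k)) => //.
  - by move=> w [h1 h2]; split; apply: PnS.
  - exact: hNN.
  - exact: rmorph_rmod.
  - exact: rmorph_rmod.
  - move=> z hz; rewrite psi1E; split; first exact: (Kimg Hs).
    change (Pn k.+1 (Hr (dA' z))).
    apply: (idpow_img (Q'_img Hr Hs)).
    apply: (delta_pow hdA hp hQ' pQ').
    by apply: (Kimg (phi := idRM A') (sC := sA')).
  - move=> z hz; rewrite psi2E; split; first exact: (Kimg Hs).
    change (Pn k.+1 (dB (Hr z))).
    by apply: (delta_pow hd hp hP pP); exact: (Kimg Hs).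
  - move=> x; rewrite psi1E psi2E W2_sub_same -f_d HF h0d -HF subrr.
    by split; apply: id0; apply: hPn.
have Hd : forall y, Hr (dA' y) = dB (Hr y).
  move=> y; apply/eqP; rewrite -subr_eq0; apply/eqP; apply: sep => k.
  by have := (chW k.+1 y).2; rewrite psi1E psi2E W2_sub_same.
exists Hr; split; last exact: HF.
by split.
Qed.
End Lift.

Lemma env_A'_of_A (D : comPzRingType) (dD : D -> D) (sD : {rmorphism R -> D})
  (g : {rmorphism A -> D}) (hg : is_envelope p dR I dA sA J dD sD g) :
  exists g'' : {rmorphism A' -> D},
    is_envelope p dR I dA' sA' J' dD sD g'' /\ forall x, g'' (f x) = g x.
Proof.
case: hg => hD hgd univ.
have [g'' [hg''d hg''f]] := exist_lift D dD sD hD g hgd.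
exists g''; split => //; split => // B dB sB hB h hh.
have hhf := dmor_comp hf hh.
case: (univ B dB sB hB _ hhf) => [[k [hk hkf]] huniq]; split.
- exists k; split => //.
  apply: (uniq_lift B dB sB hB h (k \o g'')%FUN).
  + by case: hh => _ hJ _.
  + by case: (dmor_comp hg''d hk) => _ hJ _.
  + by case: hh => _ _ hs.
  + by case: (dmor_comp hg''d hk) => _ _ hs.
  + by move=> x /=; rewrite hg''f; apply: hkf.
- move=> k1 k2 hk1 e1 hk2 e2; apply: huniq => //= x.
  + by rewrite e1 hg''f.
  + by rewrite e2 hg''f.
Qed.

Lemma env_A_of_A' (D : comPzRingType) (dD : D -> D) (sD : {rmorphism R -> D})
  (g' : {rmorphism A' -> D}) (hg' : is_envelope p dR I dA' sA' J' dD sD g') :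
  is_envelope p dR I dA sA J dD sD (g' \o f)%FUN.
Proof.
case: hg' => hD hgd univ; split => //; first exact: dmor_comp hf hgd.
move=> B dB sB hB h hh.
have [h' [hh' hh'f]] := exist_lift B dB sB hB h hh.
case: (univ B dB sB hB h' hh') => [[k [hk hkf]] huniq]; split.
- by exists k; split => // x /=; rewrite -hh'f; apply: hkf.
- move=> k1 k2 hk1 e1 hk2 e2; apply: (huniq k1 k2 hk1 _ hk2).
  + apply: (uniq_lift B dB sB hB h' (k1 \o g')%FUN).
    * by case: hh' => _ hJ _.
    * by case: (dmor_comp hgd hk1) => _ hJ _.
    * by case: hh' => _ _ hs.
    * by case: (dmor_comp hgd hk1) => _ _ hs.
    * by move=> x /=; rewrite hh'f; apply: e1.
  + apply: (uniq_lift B dB sB hB h' (k2 \o g')%FUN).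
    * by case: hh' => _ hJ _.
    * by case: (dmor_comp hgd hk2) => _ hJ _.
    * by case: hh' => _ _ hs.
    * by case: (dmor_comp hgd hk2) => _ _ hs.
    * by move=> x /=; rewrite hh'f; apply: e2.
Qed.

Lemma main_sec :
  (has_envelope p dR I dA sA J <-> has_envelope p dR I dA' sA' J') /\
  (forall (D : comPzRingType) (dD : D -> D) (sD : {rmorphism R -> D}) (g : {rmorphism A -> D})
          (D' : comPzRingType) (dD' : D' -> D') (sD' : {rmorphism R -> D'})
          (g' : {rmorphism A' -> D'}),
     is_envelope p dR I dA sA J dD sD g ->
     is_envelope p dR I dA' sA' J' dD' sD' g' ->
     forall k : {rmorphism D -> D'},
       dmor_over dD sD (ext_ideal sD I) dD' sD' (ext_ideal sD' I) k ->
       (forall x, k (g x) = g' (f x)) ->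
       exists k' : {rmorphism D' -> D},
         [/\ dmor_over dD' sD' (ext_ideal sD' I) dD sD (ext_ideal sD I) k',
             (forall y, k (k' y) = y) & (forall y, k' (k y) = y)]).
Proof.
split.
  split.
  - move=> [D [dD [sD [g hg]]]].
    have [g'' [hg'' _]] := env_A'_of_A D dD sD g hg.
    by exists D, dD, sD, g''.
  - move=> [D [dD [sD [g' hg']]]].
    by exists D, dD, sD, (g' \o f)%FUN; apply: env_A_of_A'.
move=> D dD sD g D' dD' sD' g' hg hg' k hk hkg.
have [g'' [hg'' hg''f]] := env_A'_of_A D dD sD g hg.
have hg0 := hg; have hg0' := hg'.
case: hg => hD hgd univ; case: hg' => hD' hgd' univ'.
case: hg'' => _ hgd'' _.
case: (univ' D dD sD hD g'' hgd'') => [[k' [hk' hk'g]] _].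
exists k'; split => //.
- have [_ hu] := univ' D' dD' sD' hD' g' hgd'.
  move=> y; apply: (hu (k \o k')%FUN (idRM D') (dmor_comp hk' hk) _ (dmor_id _ _ _)) => // z /=.
  rewrite -hk'g; symmetry.
  apply: (uniq_lift D' dD' sD' hD' (k \o g'')%FUN g').
  + by case: (dmor_comp hgd'' hk) => _ hJ _.
  + by case: hgd' => _ hJ _.
  + by case: (dmor_comp hgd'' hk) => _ _ hs.
  + by case: hgd' => _ _ hs.
  + by move=> x /=; rewrite hg''f hkg.
- have [_ hu] := univ D dD sD hD g hgd.
  move=> y; apply: (hu (k' \o k)%FUN (idRM D) (dmor_comp hk hk') _ (dmor_id _ _ _)) => // z /=.
  by rewrite hkg -hk'g hg''f.
Qed.
End Main.

Theorem proposition4p11 (p : nat) (hp : prime p)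
    (R : comPzRingType) (dR : R -> R) (I : R -> Prop)
    (hRI : is_bounded_prism p dR I)
    (A : comPzRingType) (dA : A -> A) (sA : {rmorphism R -> A}) (J : A -> Prop)
    (A' : comPzRingType) (dA' : A' -> A') (sA' : {rmorphism R -> A'}) (J' : A' -> Prop)
    (hA : dpair_over p dR I dA sA J) (hA' : dpair_over p dR I dA' sA' J')
    (f : {rmorphism A -> A'}) (hf : dmor_over dA sA J dA' sA' J' f)
    (hetale : forall n : nat, (0 < n)%N ->
       etale_mod f (ext_ideal sA (idpow (ideal_add (pideal p R) I) n))
                   (ext_ideal sA' (idpow (ideal_add (pideal p R) I) n)))
    (hinj : forall x, J' (f x) -> J x)
    (hsurj : forall y, exists x, J' (y - f x)) :
  (has_envelope p dR I dA sA J <-> has_envelope p dR I dA' sA' J') /\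
  (forall (D : comPzRingType) (dD : D -> D) (sD : {rmorphism R -> D}) (g : {rmorphism A -> D})
          (D' : comPzRingType) (dD' : D' -> D') (sD' : {rmorphism R -> D'})
          (g' : {rmorphism A' -> D'}),
     is_envelope p dR I dA sA J dD sD g ->
     is_envelope p dR I dA' sA' J' dD' sD' g' ->
     forall k : {rmorphism D -> D'},
       dmor_over dD sD (ext_ideal sD I) dD' sD' (ext_ideal sD' I) k ->
       (forall x, k (g x) = g' (f x)) ->
       exists k' : {rmorphism D' -> D},
         [/\ dmor_over dD' sD' (ext_ideal sD' I) dD sD (ext_ideal sD I) k',
             (forall y, k (k' y) = y) & (forall y, k' (k y) = y)]).
Proof.
exact: (main_sec p hp R dR I A dA sA J A' dA' sA' J' hA' f hf hetale hinj hsurj).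
Qed.
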